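(* Let $A=\{0,1\}+3\mathbb{Z}=\{n\in\mathbb{Z}: n\equiv 0 \text{ or } 1 \pmod 3\}$. Then $h(A^2)=8$.
   Context: For a set $X\subseteq\mathbb{R}^d$, the Helly number $h(X)$ is the smallest $h$ such that the following holds: for every finite family $\mathcal{F}$ of convex sets in $\mathbb{R}^d$, if every $h$ or fewer sets of $\mathcal{F}$ have a point of $X$ in their intersection, then the intersection of all sets of $\mathcal{F}$ contains a point of $X$. If no such $h$ exists, $h(X)=\infty$. Equivalently (for discrete $X$), $h(X)$ equals the maximum size of a set $T\subseteq X$ such that $\mathrm{conv}(T)\cap X$ consists only of vertices of $\mathrm{conv}(T)$. *)

(* Defs.v *)
From Stdlib Require Import Reals ZArith List.
Open Scope R_scope.

Definition point := (R * R)%type.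

Definition convex (C : point -> Prop) : Prop :=
  forall p q : point, C p -> C q -> forall t : R, 0 <= t <= 1 ->
    C ((1 - t) * fst p + t * fst q, (1 - t) * snd p + t * snd q).

Definition helly_prop (X : point -> Prop) (h : nat) : Prop :=
  forall F : list (point -> Prop),
    (forall C, In C F -> convex C) ->
    (forall G : list (point -> Prop), incl G F -> (length G <= h)%nat ->
        exists x, X x /\ forall C, In C G -> C x) ->
    exists x, X x /\ forall C, In C F -> C x.

Definition is_helly_number (X : point -> Prop) (h : nat) : Prop :=
  helly_prop X h /\ forall h', helly_prop X h' -> (h <= h')%nat.

Definition inA (m : Z) : Prop := (m mod 3 = 0)%Z \/ (m mod 3 = 1)%Z.

Definition A2 (p : point) : Prop :=
  exists m n : Z, fst p = IZR m /\ snd p = IZR n /\ inA m /\ inA n.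

(* Main.v *)
Require Import Defs.
From Stdlib Require Import Reals ZArith List Lia Lra.
From Stdlib Require Import Classical IndefiniteDescription ClassicalDescription FunctionalExtensionality.
Open Scope R_scope.

Open Scope R_scope.

Fixpoint Sn (n : nat) (f : nat -> R) : R :=
  match n with O => 0 | S n' => Sn n' f + f n' end.
Definition S9 f := Sn 9 f.

Lemma Sn_ext n f g : (forall k, (k < n)%nat -> f k = g k) -> Sn n f = Sn n g.
Proof. induction n; simpl; intros H; auto. rewrite IHn by (intros; apply H; lia). rewrite H by lia. auto. Qed.

Lemma Sn_nonneg n f : (forall k, (k < n)%nat -> 0 <= f k) -> 0 <= Sn n f.
Proof. induction n; simpl; intros H; [lra|]. assert (0 <= f n) by (apply H; lia).
 assert (0 <= Sn n f) by (apply IHn; intros; apply H; lia). lra. Qed.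

Lemma Sn_zero n f : (forall k, (k < n)%nat -> 0 <= f k) -> Sn n f = 0 -> forall k, (k < n)%nat -> f k = 0.
Proof. induction n; simpl; intros H E k Hk; [lia|].
 assert (0 <= f n) by (apply H; lia).
 assert (0 <= Sn n f) by (apply Sn_nonneg; intros; apply H; lia).
 destruct (Nat.eq_dec k n). subst; lra. apply IHn; [intros; apply H; lia|lra|lia]. Qed.

Lemma Sn_le_elem n f i : (forall k, (k < n)%nat -> 0 <= f k) -> (i < n)%nat -> f i <= Sn n f.
Proof. induction n; simpl; intros H Hi; [lia|].
 assert (0 <= f n) by (apply H; lia).
 assert (0 <= Sn n f) by (apply Sn_nonneg; intros; apply H; lia).
 destruct (Nat.eq_dec i n). subst; lra. assert (f i <= Sn n f) by (apply IHn; [intros; apply H; lia| lia]). lra. Qed.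

Lemma Sn_plus n f g : Sn n (fun k => f k + g k) = Sn n f + Sn n g.
Proof. induction n; simpl; [lra|]. rewrite IHn. ring. Qed.
Lemma Sn_scal n c f : Sn n (fun k => c * f k) = c * Sn n f.
Proof. induction n; simpl; [ring|]. rewrite IHn. ring. Qed.
Lemma Sn_const0 n : Sn n (fun _ => 0) = 0.
Proof. induction n; simpl; [ring|]. rewrite IHn. ring. Qed.
Lemma Sn_delta n i g : (i < n)%nat -> Sn n (fun k => (if Nat.eqb k i then 1 else 0) * g k) = g i.
Proof. induction n; simpl; intros Hi; [lia|].
 destruct (Nat.eq_dec i n).
 - subst. rewrite Nat.eqb_refl. rewrite (Sn_ext n _ (fun _ => 0)). 
   + rewrite Sn_const0. ring.
   + intros k Hk. destruct (Nat.eqb_spec k n); [lia|ring].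
 - rewrite IHn by lia. destruct (Nat.eqb_spec n i); [lia|ring]. Qed.
Lemma Sn_del n i f : (i < n)%nat -> Sn n (fun k => if Nat.eqb k i then 0 else f k) = Sn n f - f i.
Proof. induction n; simpl; intros Hi; [lia|].
 destruct (Nat.eq_dec i n).
 - subst. rewrite Nat.eqb_refl. rewrite (Sn_ext n _ f). ring.
   intros k Hk. destruct (Nat.eqb_spec k n); [lia|ring].
 - rewrite IHn by lia. destruct (Nat.eqb_spec n i); [lia|ring]. Qed.

Open Scope R_scope.

Definition inconv (T : nat -> point) (ex : nat -> Prop) (y : point) : Prop :=
 exists w : nat -> R, (forall k, 0 <= w k) /\ (forall k, ex k -> w k = 0) /\ S9 w = 1 /\
   fst y = S9 (fun k => w k * fst (T k)) /\ snd y = S9 (fun k => w k * snd (T k)).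

Definition dl (i k : nat) : R := if Nat.eqb k i then 1 else 0.

Lemma Sn_swap n n' F : Sn n (fun m => Sn n' (fun k => F k m)) = Sn n' (fun k => Sn n (fun m => F k m)).
Proof. induction n; simpl. - rewrite Sn_const0. auto.
 - rewrite IHn. rewrite <- Sn_plus. auto. Qed.

Lemma inconv_weaken T ex ex' y : inconv T ex y -> (forall k, ex' k -> ex k) -> inconv T ex' y.
Proof. intros [w [H1 [H2 [H3 [H4 H5]]]]] H. exists w; repeat split; auto. Qed.

Lemma inconv_ext T T' ex y : (forall k, (k < 9)%nat -> T k = T' k) -> inconv T ex y -> inconv T' ex y.
Proof. intros E [w [H1 [H2 [H3 [H4 H5]]]]]. exists w; repeat split; auto.
 - rewrite H4. apply Sn_ext. intros. rewrite E; auto.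
 - rewrite H5. apply Sn_ext. intros. rewrite E; auto. Qed.

Lemma inconv_pt T ex i : (i < 9)%nat -> ~ ex i -> inconv T ex (T i).
Proof. intros Hi Hex. exists (dl i). unfold dl. repeat split.
 - intros k. destruct (Nat.eqb k i); lra.
 - intros k Hk. destruct (Nat.eqb_spec k i); [subst; tauto| auto].
 - unfold S9. rewrite (Sn_ext 9 _ (fun k => (if Nat.eqb k i then 1 else 0) * 1)) by (intros; ring).
   rewrite Sn_delta; auto.
 - unfold S9. rewrite Sn_delta; auto.
 - unfold S9. rewrite Sn_delta; auto. Qed.

Lemma S9_nonneg f : (forall k, (k < 9)%nat -> 0 <= f k) -> 0 <= S9 f.
Proof. apply Sn_nonneg. Qed.

Lemma mono T T' ex ex' : (forall k, (k < 9)%nat -> ~ ex' k -> inconv T ex (T' k)) ->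
  forall y, inconv T' ex' y -> inconv T ex y.
Proof.
 intros H y [v [V1 [V2 [V3 [V4 V5]]]]].
 assert (HW : exists W : nat -> nat -> R, forall k, (k < 9)%nat -> ~ ex' k ->
   (forall m, 0 <= W k m) /\ (forall m, ex m -> W k m = 0) /\ S9 (W k) = 1 /\
   fst (T' k) = S9 (fun m => W k m * fst (T m)) /\ snd (T' k) = S9 (fun m => W k m * snd (T m))).
 { apply (functional_choice (fun k Wk => (k < 9)%nat -> ~ ex' k ->
   (forall m, 0 <= Wk m) /\ (forall m, ex m -> Wk m = 0) /\ S9 Wk = 1 /\
   fst (T' k) = S9 (fun m => Wk m * fst (T m)) /\ snd (T' k) = S9 (fun m => Wk m * snd (T m)))).
   intros k. destruct (classic ((k < 9)%nat /\ ~ ex' k)) as [[Hk Hn]|Hn].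
   - destruct (H k Hk Hn) as [w Hw]. exists w. auto.
   - exists (fun _ => 0). intros Hk Hn'. exfalso; tauto. }
 destruct HW as [W HW].
 assert (Hz : forall k, (k < 9)%nat -> ex' k -> v k = 0) by auto.
 exists (fun m => S9 (fun k => v k * W k m)). repeat split.
 - intros m. apply S9_nonneg. intros k Hk. destruct (classic (ex' k)) as [He|He].
   + rewrite Hz; auto. lra.
   + destruct (HW k Hk He) as [A1 _]. specialize (V1 k). specialize (A1 m). nra.
 - intros m Hm. unfold S9. rewrite (Sn_ext 9 _ (fun _ => 0)). apply Sn_const0.
   intros k Hk. destruct (classic (ex' k)) as [He|He].
   + rewrite Hz; auto. lra.
   + destruct (HW k Hk He) as [_ [A2 _]]. rewrite A2; auto. ring.
 - unfold S9. rewrite Sn_swap. rewrite <- V3. unfold S9. apply Sn_ext. intros k Hk.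
   rewrite Sn_scal. destruct (classic (ex' k)) as [He|He].
   + rewrite Hz; auto. ring.
   + destruct (HW k Hk He) as [_ [_ [A3 _]]]. unfold S9 in A3. rewrite A3. ring.
 - rewrite V4. unfold S9. 
   rewrite (Sn_ext 9 (fun m => Sn 9 (fun k => v k * W k m) * fst (T m)) (fun m => Sn 9 (fun k => v k * W k m * fst (T m)))).
   2:{ intros m Hm. rewrite Rmult_comm, <- Sn_scal. apply Sn_ext. intros; ring. }
   rewrite Sn_swap. apply Sn_ext. intros k Hk. destruct (classic (ex' k)) as [He|He].
   + rewrite Hz; auto. rewrite (Sn_ext 9 _ (fun _ => 0)) by (intros; ring). rewrite Sn_const0. ring.
   + destruct (HW k Hk He) as [_ [_ [_ [A4 _]]]]. rewrite A4. unfold S9. rewrite <- Sn_scal.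
     apply Sn_ext. intros; ring.
 - rewrite V5. unfold S9. 
   rewrite (Sn_ext 9 (fun m => Sn 9 (fun k => v k * W k m) * snd (T m)) (fun m => Sn 9 (fun k => v k * W k m * snd (T m)))).
   2:{ intros m Hm. rewrite Rmult_comm, <- Sn_scal. apply Sn_ext. intros; ring. }
   rewrite Sn_swap. apply Sn_ext. intros k Hk. destruct (classic (ex' k)) as [He|He].
   + rewrite Hz; auto. rewrite (Sn_ext 9 _ (fun _ => 0)) by (intros; ring). rewrite Sn_const0. ring.
   + destruct (HW k Hk He) as [_ [_ [_ [_ A5]]]]. rewrite A5. unfold S9. rewrite <- Sn_scal.
     apply Sn_ext. intros; ring.
Qed.

Open Scope R_scope.

Definition upd (T : nat -> point) j y := fun k => if Nat.eqb k j then y else T k.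

Lemma S9_div f d : d <> 0 -> S9 (fun k => f k / d) = S9 f / d.
Proof. intros. unfold S9, Rdiv. rewrite (Sn_ext 9 _ (fun k => /d * f k)) by (intros; ring).
 rewrite Sn_scal. ring. Qed.

Lemma RS T c i : (i < 9)%nat -> (forall k, 0 <= c k) -> S9 c = 1 -> c i < 1 ->
  fst (T i) = S9 (fun k => c k * fst (T k)) -> snd (T i) = S9 (fun k => c k * snd (T k)) ->
  inconv T (fun k => k = i) (T i).
Proof.
 intros Hi Hc Hs Hci H1 H2.
 exists (fun k => (if Nat.eqb k i then 0 else c k) / (1 - c i)). repeat split.
 - intros k. apply Rmult_le_pos. destruct (Nat.eqb k i); [lra|auto].
   left. apply Rinv_0_lt_compat. lra.
 - intros k Hk. subst. rewrite Nat.eqb_refl. unfold Rdiv. ring.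
 - rewrite S9_div by lra. unfold S9. rewrite Sn_del by auto. fold (S9 c). rewrite Hs. field. lra.
 - rewrite (Sn_ext 9 _ (fun k => (if Nat.eqb k i then 0 else c k * fst (T k)) / (1 - c i))).
   2:{ intros k _. destruct (Nat.eqb k i); unfold Rdiv; ring. }
   fold (S9 (fun k => (if Nat.eqb k i then 0 else c k * fst (T k)) / (1 - c i))).
   rewrite S9_div by lra. unfold S9. rewrite Sn_del by auto. fold (S9 (fun k => c k * fst (T k))).
   rewrite <- H1. field. lra.
 - rewrite (Sn_ext 9 _ (fun k => (if Nat.eqb k i then 0 else c k * snd (T k)) / (1 - c i))).
   2:{ intros k _. destruct (Nat.eqb k i); unfold Rdiv; ring. }
   fold (S9 (fun k => (if Nat.eqb k i then 0 else c k * snd (T k)) / (1 - c i))).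
   rewrite S9_div by lra. unfold S9. rewrite Sn_del by auto. fold (S9 (fun k => c k * snd (T k))).
   rewrite <- H2. field. lra.
Qed.

Lemma only_i u i x : (i < 9)%nat -> (forall k, 0 <= u k) -> S9 u = 1 -> u i = 1 ->
  S9 (fun k => u k * x k) = x i.
Proof.
 intros Hi Hu Hs Hui.
 assert (Hz : forall k, (k < 9)%nat -> (if Nat.eqb k i then 0 else u k) = 0).
 { apply Sn_zero. intros k _. destruct (Nat.eqb k i); auto; lra.
   rewrite Sn_del by auto. fold (S9 u). lra. }
 unfold S9. rewrite <- (Sn_delta 9 i x) by auto. apply Sn_ext. intros k Hk.
 specialize (Hz k Hk). destruct (Nat.eqb_spec k i). subst. rewrite Hui. ring. rewrite Hz. ring.
Qed.

Lemma EP T i j y : (i < 9)%nat -> (j < 9)%nat -> ~ inconv T (fun k => k = i) (T i) ->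
  inconv T (fun _ => False) y -> y <> T i ->
  ~ inconv (upd T j y) (fun k => k = i /\ k <> j) (T i).
Proof.
 intros Hi Hj Hn [u [U1 [U2 [U3 [U4 U5]]]]] Hy [v [V1 [V2 [V3 [V4 V5]]]]].
 set (d := fun k => if Nat.eqb k j then 0 else v k).
 set (c := fun k => d k + v j * u k).
 assert (Hd0 : forall k, 0 <= d k). { intros k; unfold d; destruct (Nat.eqb k j); auto; lra. }
 assert (Hc0 : forall k, 0 <= c k). { intros k; unfold c. specialize (Hd0 k). specialize (V1 j). specialize (U1 k). nra. }
 assert (HSd : S9 d = 1 - v j). { unfold d, S9. rewrite Sn_del by auto. fold (S9 v). lra. }
 assert (HSc : S9 c = 1). { unfold c, S9. rewrite Sn_plus, Sn_scal. fold (S9 d). fold (S9 u). rewrite HSd, U3. ring. }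
 assert (Hci : c i = v j * u i).
 { unfold c, d. destruct (Nat.eqb_spec i j). ring. rewrite V2 by auto. ring. }
 assert (Hcoord : forall (g : point -> R), g y = S9 (fun k => u k * g (T k)) ->
     g (T i) = S9 (fun k => v k * g (upd T j y k)) -> g (T i) = S9 (fun k => c k * g (T k))).
 { intros g Gy Gi. rewrite Gi. unfold S9.
   rewrite (Sn_ext 9 _ (fun k => d k * g (T k) + v j * ((if Nat.eqb k j then 1 else 0) * g y))).
   2:{ intros k _. unfold d, upd. destruct (Nat.eqb_spec k j). subst. ring. ring. }
   rewrite Sn_plus, Sn_scal, Sn_delta by auto. rewrite Gy. unfold S9, c.
   rewrite (Sn_ext 9 (fun k => (d k + v j * u k) * g (T k)) (fun k => d k * g (T k) + v j * (u k * g (T k)))) by (intros; ring).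
   rewrite Sn_plus, Sn_scal. ring. }
 assert (C1 := Hcoord fst U4 V4). assert (C2 := Hcoord snd U5 V5).
 destruct (Rlt_or_le (c i) 1) as [Hlt|Hge].
 - apply Hn. apply (RS T c i); auto.
 - assert (vj1 : v j <= 1). { rewrite <- V3. apply Sn_le_elem; auto. }
   assert (ui1 : u i <= 1). { rewrite <- U3. apply Sn_le_elem; auto. }
   assert (Hu : u i = 1). { specialize (V1 j). specialize (U1 i). nra. }
   apply Hy. destruct y as [y1 y2]. simpl in U4, U5. rewrite U4, U5.
   rewrite (only_i u i (fun k => fst (T k))), (only_i u i (fun k => snd (T k))) by auto.
   destruct (T i); auto.
Qed.

Open Scope R_scope.

Definition pt (a b : nat -> Z) : nat -> point := fun k => (IZR (a k), IZR (b k)).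
Definition allA (a b : nat -> Z) := forall k, (k < 9)%nat -> inA (a k) /\ inA (b k).
Definition CE T j := inconv T (fun k => k = j).
Definition CA T := inconv T (fun _ => False).
Definition good a b := exists m n, inA m /\ inA n /\ forall j, (j < 9)%nat -> CE (pt a b) j (IZR m, IZR n).
Definition updZ (a : nat -> Z) j m := fun k => if Nat.eqb k j then m else a k.

Lemma pt_upd a b j m n : pt (updZ a j m) (updZ b j n) = upd (pt a b) j (IZR m, IZR n).
Proof. apply functional_extensionality. intros k. unfold pt, updZ, upd. destruct (Nat.eqb k j); auto. Qed.

Fixpoint cntN (n : nat) (P : nat -> Prop) : nat :=
  match n with O => O | S n' => (cntN n' P + if excluded_middle_informative (P n') then 1 else 0)%nat end.

Lemma cntN_le n P Q : (forall k, (k < n)%nat -> P k -> Q k) -> (cntN n P <= cntN n Q)%nat.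
Proof. induction n; simpl; intros H; [lia|].
 assert (cntN n P <= cntN n Q)%nat by (apply IHn; intros; apply H; auto; lia).
 destruct (excluded_middle_informative (P n)); destruct (excluded_middle_informative (Q n)); try lia.
 exfalso; apply n0; apply H; auto. Qed.

Lemma cntN_lt n P Q : (forall k, (k < n)%nat -> P k -> Q k) -> (exists k, (k < n)%nat /\ Q k /\ ~ P k) ->
  (cntN n P < cntN n Q)%nat.
Proof. induction n; simpl; intros H [k [Hk [Hq Hp]]]; [lia|].
 destruct (Nat.eq_dec k n).
 - subst. assert (cntN n P <= cntN n Q)%nat by (apply cntN_le; intros; apply H; auto; lia).
   destruct (excluded_middle_informative (P n)); destruct (excluded_middle_informative (Q n)); try tauto. lia.
 - assert (cntN n P < cntN n Q)%nat by (apply IHn; [intros; apply H; auto; lia| exists k; repeat split; auto; lia]).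
   destruct (excluded_middle_informative (P n)); destruct (excluded_middle_informative (Q n)); try lia.
   exfalso; apply n1; apply H; auto. Qed.

Lemma notgood_pt a b : allA a b -> ~ good a b -> forall i, (i < 9)%nat -> ~ CE (pt a b) i (pt a b i).
Proof. intros HA Hg i Hi H. apply Hg. exists (a i), (b i). destruct (HA i Hi) as [H1 H2].
 repeat split; auto. intros j Hj. destruct (Nat.eq_dec j i). subst; auto.
 change (CE (pt a b) j (pt a b i)). apply inconv_pt; auto. Qed.

Lemma descent a b : allA a b -> ~ good a b -> forall N m n,
  (cntN 9 (fun j => ~ CE (pt a b) j (IZR m, IZR n)) < N)%nat -> inA m -> inA n ->
  CA (pt a b) (IZR m, IZR n) -> (forall i, (i < 9)%nat -> (IZR m, IZR n) <> pt a b i) ->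
  exists a' b', allA a' b' /\ ~ good a' b' /\ (forall p, CA (pt a' b') p -> CA (pt a b) p) /\
    exists i, (i < 9)%nat /\ ~ CA (pt a' b') (pt a b i).
Proof.
 intros HA Hg N. induction N as [|N IH]; intros m n Hc Hm Hn Hy Hne; [lia|].
 set (T := pt a b) in *. set (y := (IZR m, IZR n)) in *.
 assert (Hj : exists j, (j < 9)%nat /\ ~ CE T j y).
 { apply NNPP. intros Hno. apply Hg. exists m, n. repeat split; auto. intros j Hj.
   apply NNPP. intros Hn'. apply Hno. exists j; auto. }
 destruct Hj as [j [Hj HjM]].
 set (a' := updZ a j m). set (b' := updZ b j n).
 assert (ET : pt a' b' = upd T j y) by (apply pt_upd).
 assert (HA' : allA a' b').
 { intros k Hk. unfold a', b', updZ. destruct (Nat.eqb k j); auto. }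
 assert (Hincl : forall p, CA (pt a' b') p -> CA T p).
 { rewrite ET. apply mono. intros k Hk _. unfold upd. destruct (Nat.eqb_spec k j). auto.
   apply inconv_pt; auto. }
 assert (HnT : forall i, (i < 9)%nat -> ~ CE T i (T i)) by (apply notgood_pt; auto).
 assert (Hstrict : ~ CA (pt a' b') (T j)).
 { rewrite ET. intros H. apply (EP T j j y); auto. apply (HnT j Hj).
   apply inconv_weaken with (fun _ => False); auto. intros k [? ?]; auto. }
 destruct (classic (good a' b')) as [Hg'|Hg'].
 2:{ exists a', b'. split; [auto|split; [auto|split; [auto|]]]. exists j; auto. }
 destruct Hg' as [m2 [n2 [Hm2 [Hn2 Hz]]]].
 set (z := (IZR m2, IZR n2)) in *.
 apply (IH m2 n2); auto.
 - change (cntN 9 (fun j0 => ~ CE T j0 z) < N)%nat. assert (cntN 9 (fun j0 => ~ CE T j0 z) < cntN 9 (fun j0 => ~ CE T j0 y))%nat; [|lia].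
   apply cntN_lt.
   + intros k Hk Hzk Hyk. apply Hzk. destruct (Nat.eq_dec k j). subst; tauto.
     unfold CE. apply (mono T (pt a' b') (fun l => l = k) (fun l => l = k)); [|apply Hz; auto].
     intros l Hl Hlk. rewrite ET. unfold upd. destruct (Nat.eqb_spec l j). auto. apply inconv_pt; auto.
   + exists j. repeat split; auto. intros Hzj. apply Hzj.
     unfold CE. apply (mono T (pt a' b') (fun l => l = j) (fun l => l = j)); [|apply Hz; auto].
     intros l Hl Hlk. rewrite ET. unfold upd. destruct (Nat.eqb_spec l j). tauto. apply inconv_pt; auto.
 - apply Hincl. unfold CA. apply inconv_weaken with (fun k => k = 0%nat); [apply Hz; lia| tauto].
 - intros i Hi Heq. apply (EP T i j y); auto. apply (HnT i Hi).
   assert (Hz' := Hz i Hi). change (CE (pt a' b') i (IZR m2, IZR n2)) in Hz'. rewrite Heq in Hz'.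
   rewrite <- ET. apply inconv_weaken with (fun k => k = i); [apply Hz'| tauto].
Qed.

Open Scope R_scope.

Lemma extract1 n P : (1 <= cntN n P)%nat -> exists p, (p < n)%nat /\ P p.
Proof. induction n; simpl; intros H; [lia|].
 destruct (excluded_middle_informative (P n)) as [HPn|HPn]. exists n; auto.
 destruct IHn as [p [? ?]]; [lia|]. exists p; split; auto; lia. Qed.
Lemma extract2 n P : (2 <= cntN n P)%nat -> exists p q, (p < q < n)%nat /\ P p /\ P q.
Proof. induction n; simpl; intros H; [lia|].
 destruct (excluded_middle_informative (P n)) as [HPn|HPn].
 - destruct (extract1 n P) as [p [? ?]]; [lia|]. exists p, n; repeat split; auto; lia.
 - destruct IHn as [p [q [? ?]]]; [lia|]. exists p, q; repeat split; try tauto; lia. Qed.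
Lemma extract3 n P : (3 <= cntN n P)%nat -> exists p q r, (p < q < r)%nat /\ (r < n)%nat /\ P p /\ P q /\ P r.
Proof. induction n; simpl; intros H; [lia|].
 destruct (excluded_middle_informative (P n)) as [HPn|HPn].
 - destruct (extract2 n P) as [p [q [? ?]]]; [lia|]. exists p, q, n; repeat split; try tauto; lia.
 - destruct IHn as [p [q [r [? ?]]]]; [lia|]. exists p, q, r; repeat split; try tauto; lia. Qed.

Lemma sum4 n (c : nat -> Z) : (forall k, (k < n)%nat -> (0 <= c k <= 3)%Z) ->
  (cntN n (fun k => c k = 0%Z) + cntN n (fun k => c k = 1%Z) + cntN n (fun k => c k = 2%Z) + cntN n (fun k => c k = 3%Z) = n)%nat.
Proof. induction n; simpl; intros H; [lia|].
 assert (Hn : (0 <= c n <= 3)%Z) by (apply H; lia).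
 specialize (IHn ltac:(intros; apply H; lia)).
 destruct (excluded_middle_informative (c n = 0%Z));
 destruct (excluded_middle_informative (c n = 1%Z));
 destruct (excluded_middle_informative (c n = 2%Z));
 destruct (excluded_middle_informative (c n = 3%Z)); lia. Qed.

Lemma pigeon (c : nat -> Z) : (forall k, (k < 9)%nat -> (0 <= c k <= 3)%Z) ->
  exists p q r, (p < q < r)%nat /\ (r < 9)%nat /\ c p = c q /\ c q = c r.
Proof. intros H. pose proof (sum4 9 c H) as E.
 assert (exists v, (3 <= cntN 9 (fun k => c k = v))%nat) as [v Hv].
 { destruct (le_lt_dec 3 (cntN 9 (fun k => c k = 0%Z))). eexists; eauto.
   destruct (le_lt_dec 3 (cntN 9 (fun k => c k = 1%Z))). eexists; eauto.
   destruct (le_lt_dec 3 (cntN 9 (fun k => c k = 2%Z))). eexists; eauto.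
   destruct (le_lt_dec 3 (cntN 9 (fun k => c k = 3%Z))). eexists; eauto. lia. }
 destruct (extract3 9 _ Hv) as [p [q [r [? [? [? [? ?]]]]]]].
 exists p, q, r. repeat split; try lia; congruence. Qed.

Open Scope Z_scope.
Ltac tl := (split; [lia|]); unfold inA; vm_compute;
 split; first [left; reflexivity | right; reflexivity].
Lemma residues rA rB s1 s2 t1 t2 : 0 <= rA <= 1 -> 0 <= rB <= 1 -> 0 <= s1 < 3 -> 0 <= s2 < 3 ->
  0 <= t1 < 3 -> 0 <= t2 < 3 ->
  exists be ga, (0 <= be <= 2 /\ 0 <= ga <= 2 /\ 1 <= be + ga <= 3) /\
    inA (rA + be * s1 + ga * s2) /\ inA (rB + be * t1 + ga * t2).
Proof.
 intros HA HB H1 H2 H3 H4.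
 assert (rA = 0 \/ rA = 1) as [-> | ->] by lia;
 assert (rB = 0 \/ rB = 1) as [-> | ->] by lia;
 assert (s1 = 0 \/ s1 = 1 \/ s1 = 2) as [-> | [-> | ->]] by lia;
 assert (s2 = 0 \/ s2 = 1 \/ s2 = 2) as [-> | [-> | ->]] by lia;
 assert (t1 = 0 \/ t1 = 1 \/ t1 = 2) as [-> | [-> | ->]] by lia;
 assert (t2 = 0 \/ t2 = 1 \/ t2 = 2) as [-> | [-> | ->]] by lia;
 first [ exists 1, 0; tl | exists 2, 0; tl | exists 0, 1; tl | exists 0, 2; tl | exists 1, 1; tl | exists 2, 1; tl | exists 1, 2; tl ].
Qed.

Open Scope Z_scope.

Lemma modred A be ga e1 e2 : (A + be*e1 + ga*e2) mod 3 = (A mod 3 + be*(e1 mod 3) + ga*(e2 mod 3)) mod 3.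
Proof.
 assert (E : A + be*e1 + ga*e2 = (A mod 3 + be*(e1 mod 3) + ga*(e2 mod 3)) + (A/3 + be*(e1/3) + ga*(e2/3))*3).
 { pose proof (Z.div_mod A 3 ltac:(lia)). pose proof (Z.div_mod e1 3 ltac:(lia)). pose proof (Z.div_mod e2 3 ltac:(lia)).
   remember (A/3) as qa. remember (A mod 3) as ra. remember (e1/3) as q1. remember (e1 mod 3) as r1.
   remember (e2/3) as q2. remember (e2 mod 3) as r2. subst A e1 e2. ring. }
 rewrite E. apply Z_mod_plus_full. Qed.

Lemma key A B e1 e2 f1 f2 : inA A -> inA B -> exists be ga, (0 <= be <= 2 /\ 0 <= ga <= 2 /\ 1 <= be + ga <= 3) /\
  inA (A + be*e1 + ga*e2) /\ inA (B + be*f1 + ga*f2).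
Proof.
 intros HA HB.
 destruct (residues (A mod 3) (B mod 3) (e1 mod 3) (e2 mod 3) (f1 mod 3) (f2 mod 3)) as [be [ga [R [I1 I2]]]].
 - unfold inA in HA; lia.
 - unfold inA in HB; lia.
 - apply Z.mod_pos_bound; lia.
 - apply Z.mod_pos_bound; lia.
 - apply Z.mod_pos_bound; lia.
 - apply Z.mod_pos_bound; lia.
 - exists be, ga. split; auto. unfold inA in *. rewrite (modred A), (modred B). 
   split; auto. Qed.

Lemma modeq x y : x mod 3 = y mod 3 -> x = (y + 3 * (x/3 - y/3))%Z.
Proof. intros H. pose proof (Z.div_mod x 3 ltac:(lia)). pose proof (Z.div_mod y 3 ltac:(lia)). lia. Qed.

Open Scope R_scope.

Lemma S3 p q r c1 c2 c3 x : (p < 9)%nat -> (q < 9)%nat -> (r < 9)%nat ->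
  S9 (fun k => (c1 * dl p k + c2 * dl q k + c3 * dl r k) * x k) = c1 * x p + c2 * x q + c3 * x r.
Proof. intros. unfold S9.
 rewrite (Sn_ext 9 _ (fun k => c1 * (dl p k * x k) + c2 * (dl q k * x k) + c3 * (dl r k * x k))) by (intros; ring).
 rewrite !Sn_plus, !Sn_scal. unfold dl. rewrite !Sn_delta; auto. Qed.

Lemma find_y a b : allA a b -> ~ good a b -> exists m n, inA m /\ inA n /\ CA (pt a b) (IZR m, IZR n) /\
  forall i, (i < 9)%nat -> (IZR m, IZR n) <> pt a b i.
Proof.
 intros HA Hg.
 destruct (pigeon (fun k => 2 * (a k mod 3) + b k mod 3)%Z) as [p [q [r [Hpqr [Hr [C1 C2]]]]]].
 { intros k Hk. destruct (HA k Hk) as [H1 H2]. unfold inA in *. lia. }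
 destruct (HA p ltac:(lia)) as [Ap Bp]. destruct (HA q ltac:(lia)) as [Aq Bq]. destruct (HA r ltac:(lia)) as [Ar Br].
 assert (M1 : (a q mod 3 = a p mod 3 /\ b q mod 3 = b p mod 3)%Z) by (unfold inA in *; lia).
 assert (M2 : (a r mod 3 = a p mod 3 /\ b r mod 3 = b p mod 3)%Z) by (unfold inA in *; lia).
 set (e1 := (a q / 3 - a p / 3)%Z). set (e2 := (a r / 3 - a p / 3)%Z).
 set (f1 := (b q / 3 - b p / 3)%Z). set (f2 := (b r / 3 - b p / 3)%Z).
 assert (Ea1 : a q = (a p + 3 * e1)%Z) by (unfold e1; apply modeq; apply (proj1 M1)).
 assert (Ea2 : a r = (a p + 3 * e2)%Z) by (unfold e2; apply modeq; apply (proj1 M2)).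
 assert (Eb1 : b q = (b p + 3 * f1)%Z) by (unfold f1; apply modeq; apply (proj2 M1)).
 assert (Eb2 : b r = (b p + 3 * f2)%Z) by (unfold f2; apply modeq; apply (proj2 M2)).
 destruct (key (a p) (b p) e1 e2 f1 f2 Ap Bp) as [be [ga [[Rb [Rg Rs]] [I1 I2]]]].
 exists (a p + be*e1 + ga*e2)%Z, (b p + be*f1 + ga*f2)%Z.
 set (w := fun k => IZR (3 - be - ga) / 3 * dl p k + IZR be / 3 * dl q k + IZR ga / 3 * dl r k).
 assert (Hw0 : forall k, 0 <= w k).
 { intros k. unfold w, dl. 
   assert (0 <= IZR (3 - be - ga)) by (apply IZR_le; lia).
   assert (0 <= IZR be) by (apply IZR_le; lia). assert (0 <= IZR ga) by (apply IZR_le; lia).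
   destruct (Nat.eqb k p); destruct (Nat.eqb k q); destruct (Nat.eqb k r); lra. }
 assert (Hws : S9 w = 1).
 { unfold w. rewrite (Sn_ext 9 _ (fun k => (IZR (3 - be - ga) / 3 * dl p k + IZR be / 3 * dl q k + IZR ga / 3 * dl r k) * 1)) by (intros; ring).
   fold (S9 (fun k => (IZR (3 - be - ga) / 3 * dl p k + IZR be / 3 * dl q k + IZR ga / 3 * dl r k) * 1)).
   rewrite S3 by lia. rewrite !minus_IZR. field. }
 assert (Hx : IZR (a p + be * e1 + ga * e2) = S9 (fun k => w k * fst (pt a b k))).
 { unfold w. rewrite S3 by lia. unfold pt; cbn [fst snd]. rewrite Ea1, Ea2.
   rewrite ?plus_IZR, ?minus_IZR, ?mult_IZR. field. }
 assert (Hy : IZR (b p + be * f1 + ga * f2) = S9 (fun k => w k * snd (pt a b k))).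
 { unfold w. rewrite S3 by lia. unfold pt; cbn [fst snd]. rewrite Eb1, Eb2.
   rewrite ?plus_IZR, ?minus_IZR, ?mult_IZR. field. }
 split; [auto|split; [auto|split]].
 - exists w. repeat split; auto. intros k [].
 - intros i Hi Heq. apply (notgood_pt a b HA Hg i Hi). apply (RS (pt a b) w i); auto.
   + unfold w, dl.
     assert (IZR (3 - be - ga) <= 2) by (apply IZR_le; lia).
     assert (IZR be <= 2) by (apply IZR_le; lia). assert (IZR ga <= 2) by (apply IZR_le; lia).
     assert (0 <= IZR (3 - be - ga)) by (apply IZR_le; lia).
     assert (0 <= IZR be) by (apply IZR_le; lia). assert (0 <= IZR ga) by (apply IZR_le; lia).
     destruct (Nat.eqb_spec i p); destruct (Nat.eqb_spec i q); destruct (Nat.eqb_spec i r); try lia; lra.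
   + rewrite <- Heq. simpl. auto.
   + rewrite <- Heq. simpl. auto.
Qed.

Open Scope R_scope.

Lemma Sn_le n f g : (forall k, (k < n)%nat -> f k <= g k) -> Sn n f <= Sn n g.
Proof. induction n; simpl; intros H; [lra|].
 assert (Sn n f <= Sn n g) by (apply IHn; intros; apply H; lia).
 assert (f n <= g n) by (apply H; lia). lra. Qed.

Lemma wsum_le w x M : (forall k, 0 <= w k) -> S9 w = 1 -> (forall k, (k < 9)%nat -> x k <= M) ->
  S9 (fun k => w k * x k) <= M.
Proof. intros H0 H1 H2. unfold S9. apply Rle_trans with (Sn 9 (fun k => M * w k)).
 - apply Sn_le. intros k Hk. specialize (H2 k Hk). specialize (H0 k). nra.
 - rewrite Sn_scal. fold (S9 w). rewrite H1. lra. Qed.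
Lemma wsum_ge w x M : (forall k, 0 <= w k) -> S9 w = 1 -> (forall k, (k < 9)%nat -> M <= x k) ->
  M <= S9 (fun k => w k * x k).
Proof. intros H0 H1 H2. unfold S9. apply Rle_trans with (Sn 9 (fun k => M * w k)).
 - rewrite Sn_scal. fold (S9 w). rewrite H1. lra.
 - apply Sn_le. intros k Hk. specialize (H2 k Hk). specialize (H0 k). nra. Qed.

Fixpoint ZS (n : nat) (f : nat -> Z) : Z := match n with O => 0%Z | S n' => (ZS n' f + f n')%Z end.
Lemma ZS_ge n f i : (forall k, (0 <= f k)%Z) -> (i < n)%nat -> (f i <= ZS n f)%Z.
Proof. induction n; simpl; intros H Hi; [lia|].
 assert (0 <= ZS n f)%Z. { clear IHn Hi. induction n; simpl; [lia|]. specialize (H n). lia. }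
 destruct (Nat.eq_dec i n). subst. lia. specialize (IHn H ltac:(lia)). specialize (H n). lia. Qed.

Definition bound (a b : nat -> Z) : Z := ZS 9 (fun k => Z.abs (a k) + Z.abs (b k))%Z.

Lemma bnd a b m n : CA (pt a b) (IZR m, IZR n) ->
  (- bound a b <= m <= bound a b /\ - bound a b <= n <= bound a b)%Z.
Proof.
 intros [w [W1 [_ [W3 [W4 W5]]]]]. simpl in W4, W5.
 assert (Hk : forall k, (k < 9)%nat -> (Z.abs (a k) + Z.abs (b k) <= bound a b)%Z).
 { intros k Hk. unfold bound. apply (ZS_ge 9 (fun k => Z.abs (a k) + Z.abs (b k))%Z); auto. intros; lia. }
 assert (Ha : forall k, (k < 9)%nat -> IZR (a k) <= IZR (bound a b) /\ IZR (- bound a b) <= IZR (a k)).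
 { intros k Hk'. specialize (Hk k Hk'). split; apply IZR_le; lia. }
 assert (Hb : forall k, (k < 9)%nat -> IZR (b k) <= IZR (bound a b) /\ IZR (- bound a b) <= IZR (b k)).
 { intros k Hk'. specialize (Hk k Hk'). split; apply IZR_le; lia. }
 assert (IZR m <= IZR (bound a b)). { rewrite W4. apply wsum_le; auto. intros k Hk'. apply Ha; auto. }
 assert (IZR (- bound a b) <= IZR m). { rewrite W4. apply wsum_ge; auto. intros k Hk'. apply Ha; auto. }
 assert (IZR n <= IZR (bound a b)). { rewrite W5. apply wsum_le; auto. intros k Hk'. apply Hb; auto. }
 assert (IZR (- bound a b) <= IZR n). { rewrite W5. apply wsum_ge; auto. intros k Hk'. apply Hb; auto. }
 apply le_IZR in H, H0, H1, H2. lia. Qed.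

Definition Zr (N : Z) : list Z := map (fun i => (Z.of_nat i - N)%Z) (seq 0 (Z.to_nat (2 * N + 1))).
Lemma in_Zr N m : (- N <= m <= N)%Z -> In m (Zr N).
Proof. intros H. unfold Zr. apply in_map_iff. exists (Z.to_nat (m + N)). split.
 - rewrite Z2Nat.id by lia. lia.
 - apply in_seq. lia. Qed.
Definition grid N : list point := flat_map (fun m => map (fun n => (IZR m, IZR n)) (Zr N)) (Zr N).
Lemma in_grid N m n : (- N <= m <= N)%Z -> (- N <= n <= N)%Z -> In (IZR m, IZR n) (grid N).
Proof. intros. unfold grid. apply in_flat_map. exists m. split. apply in_Zr; auto.
 apply in_map_iff. exists n. split; auto. apply in_Zr; auto. Qed.

Fixpoint cntL (P : point -> Prop) (l : list point) : nat :=
  match l with nil => O | g :: l' => ((if excluded_middle_informative (P g) then 1 else 0) + cntL P l')%nat end.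
Lemma cntL_le P Q l : (forall g, In g l -> P g -> Q g) -> (cntL P l <= cntL Q l)%nat.
Proof. induction l; simpl; intros H; [lia|].
 assert (cntL P l <= cntL Q l)%nat by (apply IHl; auto).
 destruct (excluded_middle_informative (P a)); destruct (excluded_middle_informative (Q a)); try lia.
 exfalso; apply n; apply H; auto. Qed.
Lemma cntL_lt P Q l : (forall g, In g l -> P g -> Q g) -> (exists g, In g l /\ Q g /\ ~ P g) -> (cntL P l < cntL Q l)%nat.
Proof. induction l; simpl; intros H [g [Hg [Hq Hp]]]; [tauto|].
 destruct Hg as [Hg|Hg].
 - subst. assert (cntL P l <= cntL Q l)%nat by (apply cntL_le; auto).
   destruct (excluded_middle_informative (P g)); destruct (excluded_middle_informative (Q g)); try tauto. lia.
 - assert (cntL P l < cntL Q l)%nat by (apply IHl; auto; exists g; auto).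
   destruct (excluded_middle_informative (P a)); destruct (excluded_middle_informative (Q a)); try lia.
   exfalso; apply n; apply H; auto. Qed.

Lemma core_ind a0 b0 : forall K a b, allA a b -> (forall p, CA (pt a b) p -> CA (pt a0 b0) p) ->
  (cntL (CA (pt a b)) (grid (bound a0 b0)) < K)%nat -> good a b.
Proof.
 induction K as [|K IH]; intros a b HA Hinc Hc; [lia|].
 apply NNPP. intros Hg.
 destruct (find_y a b HA Hg) as [m [n [Hm [Hn [Hy Hne]]]]].
 destruct (descent a b HA Hg (S (cntN 9 (fun j => ~ CE (pt a b) j (IZR m, IZR n)))) m n ltac:(lia) Hm Hn Hy Hne)
   as [a' [b' [HA' [Hg' [Hinc' [i [Hi Hni]]]]]]].
 apply Hg'. apply (IH a' b'); auto.
 assert (cntL (CA (pt a' b')) (grid (bound a0 b0)) < cntL (CA (pt a b)) (grid (bound a0 b0)))%nat; [|lia].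
 apply cntL_lt; auto.
 exists (pt a b i). assert (Hp : CA (pt a b) (pt a b i)) by (apply inconv_pt; auto).
 split; auto. unfold pt. apply (bnd a0 b0 (a i) (b i)) in Hinc; [|exact Hp].
 destruct Hinc. apply in_grid; auto. Qed.

Lemma core a b : allA a b -> good a b.
Proof. intros HA. apply (core_ind a b (S (cntL (CA (pt a b)) (grid (bound a b))))); auto. Qed.

Open Scope R_scope.

Lemma convn C (HC : convex C) n (T : nat -> point) w : (forall k, 0 <= w k) ->
  (forall k, (k < n)%nat -> w k = 0 \/ C (T k)) -> 0 < Sn n w ->
  C (Sn n (fun k => w k * fst (T k)) / Sn n w, Sn n (fun k => w k * snd (T k)) / Sn n w).
Proof.
 induction n; simpl; intros H0 H1 Hs; [lra|].
 assert (Hs0 : 0 <= Sn n w) by (apply Sn_nonneg; auto).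
 assert (Ht0 := H0 n).
 destruct (Req_dec (Sn n w) 0) as [Z|NZ].
 - assert (Hz : forall k, (k < n)%nat -> w k = 0) by (apply Sn_zero; auto).
   rewrite (Sn_ext n (fun k => w k * fst (T k)) (fun _ => 0)) by (intros k Hk; rewrite Hz; auto; ring).
   rewrite (Sn_ext n (fun k => w k * snd (T k)) (fun _ => 0)) by (intros k Hk; rewrite Hz; auto; ring).
   rewrite Sn_const0, Z. 
   destruct (H1 n ltac:(lia)) as [E|Cn]; [rewrite Z in Hs; lra|].
   replace ((0 + w n * fst (T n)) / (0 + w n), (0 + w n * snd (T n)) / (0 + w n)) with (T n); auto.
   destruct (T n) as [t1 t2]. simpl. f_equal; field; lra.
 - assert (Hpos : 0 < Sn n w) by lra.
   assert (IHp := IHn H0 ltac:(intros; apply H1; lia) Hpos).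
   destruct (H1 n ltac:(lia)) as [E|Cn].
   + rewrite E. replace ((Sn n (fun k => w k * fst (T k)) + 0 * fst (T n)) / (Sn n w + 0)) with
       (Sn n (fun k => w k * fst (T k)) / Sn n w) by (field; lra).
     replace ((Sn n (fun k => w k * snd (T k)) + 0 * snd (T n)) / (Sn n w + 0)) with
       (Sn n (fun k => w k * snd (T k)) / Sn n w) by (field; lra). auto.
   + set (s := Sn n w) in *. set (t := w n) in *.
     set (lam := t / (s + t)).
     assert (Hl : 0 <= lam <= 1). { unfold lam. split. apply Rmult_le_pos; auto. left; apply Rinv_0_lt_compat; lra.
       apply Rmult_le_reg_r with (s + t); [lra|]. unfold Rdiv. rewrite Rmult_assoc, Rinv_l by lra. lra. }
     pose proof (HC _ _ IHp Cn lam Hl) as HH. simpl in HH.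
     replace ((Sn n (fun k => w k * fst (T k)) + t * fst (T n)) / (s + t)) with
       ((1 - lam) * (Sn n (fun k => w k * fst (T k)) / s) + lam * fst (T n)) by (unfold lam; field; lra).
     replace ((Sn n (fun k => w k * snd (T k)) + t * snd (T n)) / (s + t)) with
       ((1 - lam) * (Sn n (fun k => w k * snd (T k)) / s) + lam * snd (T n)) by (unfold lam; field; lra).
     exact HH.
Qed.

Lemma in_convex C T ex y : convex C -> inconv T ex y -> (forall k, (k < 9)%nat -> ~ ex k -> C (T k)) -> C y.
Proof.
 intros HC [w [W1 [W2 [W3 [W4 W5]]]]] H.
 assert (HH := convn C HC 9 T w W1). fold (S9 w) in HH. rewrite W3 in HH.
 replace y with (Sn 9 (fun k => w k * fst (T k)) / 1, Sn 9 (fun k => w k * snd (T k)) / 1).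
 - apply HH; [|lra]. intros k Hk. destruct (classic (ex k)). left; auto. right; auto.
 - destruct y as [y1 y2]. simpl in W4, W5. rewrite W4, W5. unfold S9. f_equal; field.
Qed.

Lemma helly9 (Cs : nat -> point -> Prop) (x : nat -> point) :
  (forall j, (j < 9)%nat -> convex (Cs j)) -> (forall k, (k < 9)%nat -> A2 (x k)) ->
  (forall j k, (j < 9)%nat -> (k < 9)%nat -> k <> j -> Cs j (x k)) ->
  exists y, A2 y /\ forall j, (j < 9)%nat -> Cs j y.
Proof.
 intros HC HA HI.
 destruct (functional_choice (fun k (mn : Z * Z) => (k < 9)%nat -> x k = (IZR (fst mn), IZR (snd mn)) /\ inA (fst mn) /\ inA (snd mn)))
   as [f Hf].
 { intros k. destruct (lt_dec k 9) as [Hk|Hk].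
   - destruct (HA k Hk) as [m [n [E1 [E2 [I1 I2]]]]]. exists (m, n). intros _. simpl.
     split; auto. destruct (x k); simpl in *; subst; auto.
   - exists (0%Z, 0%Z). intros; lia. }
 set (a := fun k => fst (f k)). set (b := fun k => snd (f k)).
 assert (HA' : allA a b). { intros k Hk. destruct (Hf k Hk) as [_ [? ?]]. split; auto. }
 assert (Ex : forall k, (k < 9)%nat -> x k = pt a b k). { intros k Hk. destruct (Hf k Hk) as [E _]. rewrite E. auto. }
 destruct (core a b HA') as [m [n [Hm [Hn Hy]]]].
 exists (IZR m, IZR n). split. exists m, n; auto.
 intros j Hj. apply (in_convex (Cs j) (pt a b) (fun k => k = j)); auto. apply Hy; auto.
 intros k Hk Hkj. rewrite <- Ex by auto. apply HI; auto.
Qed.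

Open Scope R_scope.

Definition goodL (G : list (point -> Prop)) := exists x, A2 x /\ forall C, In C G -> C x.

Lemma Hm G : (9 <= length G)%nat -> (forall C, In C G -> convex C) ->
  (forall G', incl G' G -> (length G' < length G)%nat -> goodL G') -> goodL G.
Proof.
 intros Hl HC Hs.
 destruct G as [|C0 [|C1 [|C2 [|C3 [|C4 [|C5 [|C6 [|C7 [|C8 R]]]]]]]]]; simpl in Hl; try lia.
 set (R' := C8 :: R).
 destruct (Hs (C1::C2::C3::C4::C5::C6::C7::R')) as [x0 [A0 H0]]; [intros c; simpl; tauto| simpl; lia|].
 destruct (Hs (C0::C2::C3::C4::C5::C6::C7::R')) as [x1 [A1 H1]]; [intros c; simpl; tauto| simpl; lia|].
 destruct (Hs (C0::C1::C3::C4::C5::C6::C7::R')) as [x2 [A2' H2]]; [intros c; simpl; tauto| simpl; lia|].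
 destruct (Hs (C0::C1::C2::C4::C5::C6::C7::R')) as [x3 [A3 H3]]; [intros c; simpl; tauto| simpl; lia|].
 destruct (Hs (C0::C1::C2::C3::C5::C6::C7::R')) as [x4 [A4 H4]]; [intros c; simpl; tauto| simpl; lia|].
 destruct (Hs (C0::C1::C2::C3::C4::C6::C7::R')) as [x5 [A5 H5]]; [intros c; simpl; tauto| simpl; lia|].
 destruct (Hs (C0::C1::C2::C3::C4::C5::C7::R')) as [x6 [A6 H6]]; [intros c; simpl; tauto| simpl; lia|].
 destruct (Hs (C0::C1::C2::C3::C4::C5::C6::R')) as [x7 [A7 H7]]; [intros c; simpl; tauto| simpl; lia|].
 destruct (Hs (C0::C1::C2::C3::C4::C5::C6::C7::nil)) as [x8 [A8 H8]]; [intros c; simpl; tauto| simpl; lia|].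
 set (D := fun p => forall C, In C R' -> C p).
 set (Cs := fun j => match j with 0 => C0 | 1 => C1 | 2 => C2 | 3 => C3 | 4 => C4 | 5 => C5 | 6 => C6 | 7 => C7 | _ => D end%nat).
 set (x := fun k => match k with 0 => x0 | 1 => x1 | 2 => x2 | 3 => x3 | 4 => x4 | 5 => x5 | 6 => x6 | 7 => x7 | _ => x8 end%nat).
 destruct (helly9 Cs x) as [y [Ay Hy]].
 - intros j Hj. destruct j as [|[|[|[|[|[|[|[|j]]]]]]]]; simpl; try (apply HC; simpl; tauto). idtac.
   intros p q Hp Hq t Ht C HCR. apply HC. simpl; tauto. apply Hp; auto. apply Hq; auto. exact Ht.
 - intros k Hk. destruct k as [|[|[|[|[|[|[|[|k]]]]]]]]; simpl; auto.
 - intros j k Hj Hk Hjk.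
   destruct j as [|[|[|[|[|[|[|[|[|j]]]]]]]]]; try lia;
   destruct k as [|[|[|[|[|[|[|[|[|k]]]]]]]]]; try lia; simpl;
   first [ apply H0; simpl; tauto | apply H1; simpl; tauto | apply H2; simpl; tauto | apply H3; simpl; tauto
         | apply H4; simpl; tauto | apply H5; simpl; tauto | apply H6; simpl; tauto | apply H7; simpl; tauto
         | apply H8; simpl; tauto
         | intros C HCR; first [ apply H0 | apply H1 | apply H2 | apply H3 | apply H4 | apply H5 | apply H6 | apply H7 ];
           simpl; tauto ].
 - exists y. split; auto. intros C HCin.
   assert (E0 := Hy 0%nat ltac:(lia)). assert (E1 := Hy 1%nat ltac:(lia)). assert (E2 := Hy 2%nat ltac:(lia)).
   assert (E3 := Hy 3%nat ltac:(lia)). assert (E4 := Hy 4%nat ltac:(lia)). assert (E5 := Hy 5%nat ltac:(lia)).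
   assert (E6 := Hy 6%nat ltac:(lia)). assert (E7 := Hy 7%nat ltac:(lia)). assert (E8 := Hy 8%nat ltac:(lia)).
   simpl in E0, E1, E2, E3, E4, E5, E6, E7, E8.
   simpl in HCin. destruct HCin as [<-|[<-|[<-|[<-|[<-|[<-|[<-|[<-|HR]]]]]]]]; auto.
   apply E8. exact HR.
Qed.

Lemma helly8 : helly_prop A2 8.
Proof.
 intros F HF Hsub.
 assert (forall n G, (length G <= n)%nat -> incl G F -> goodL G).
 { induction n as [|n IH]; intros G Hl Hi.
   - apply Hsub; auto; lia.
   - destruct (le_lt_dec (length G) 8). apply Hsub; auto.
     apply Hm; [lia| intros C HCi; apply HF; apply Hi; auto|].
     intros G' Hi' Hl'. apply IH; [lia|]. intros c Hc; apply Hi, Hi', Hc. }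
 apply (H (length F)); auto. intros c; auto.
Qed.

Open Scope R_scope.

Definition hc (i : nat) : Z * Z * Z :=
  match i with 0%nat => (1,0,-1) | 1%nat => (-1,3,0) | 2%nat => (-3,5,3) | 3%nat => (-3,4,5)
  | 4%nat => (-1,0,6) | 5%nat => (1,-3,5) | 6%nat => (3,-5,2) | _ => (3,-4,0) end%Z.
Definition Hs (i : nat) (p : point) : Prop :=
  let '(c0, c1, c2) := hc i in IZR c0 * fst p + IZR c1 * snd p + IZR c2 >= 0.
Definition Pz (k : nat) : Z * Z :=
  match k with 0%nat => (0,0) | 1%nat => (1,0) | 2%nat => (3,1) | 3%nat => (6,3) | 4%nat => (7,4)
  | 5%nat => (6,4) | 6%nat => (4,3) | _ => (1,1) end%Z.
Definition Pt (k : nat) : point := (IZR (fst (Pz k)), IZR (snd (Pz k))).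

Lemma Hs_Z i x y : Hs i (IZR x, IZR y) <-> (0 <= let '(c0, c1, c2) := hc i in c0 * x + c1 * y + c2)%Z.
Proof. unfold Hs. destruct (hc i) as [[c0 c1] c2]. cbn [fst snd]. split; intros H.
 - apply le_IZR. rewrite !plus_IZR, !mult_IZR. lra.
 - apply IZR_le in H. rewrite !plus_IZR, !mult_IZR in H. lra. Qed.

Lemma Hs_Pt i k : (i < 8)%nat -> (k < 8)%nat -> (Hs i (Pt k) <-> i <> k).
Proof. intros Hi Hk. unfold Pt. rewrite Hs_Z.
 destruct i as [|[|[|[|[|[|[|[|i]]]]]]]]; try lia;
 destruct k as [|[|[|[|[|[|[|[|k]]]]]]]]; try lia; simpl; split; intros; try lia; try congruence. Qed.

Lemma Hs_convex i : convex (Hs i).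
Proof. unfold convex, Hs. destruct (hc i) as [[c0 c1] c2]. intros p q Hp Hq t Ht. cbn [fst snd].
 assert (0 <= (1 - t) * (IZR c0 * fst p + IZR c1 * snd p + IZR c2)) by (apply Rmult_le_pos; lra).
 assert (0 <= t * (IZR c0 * fst q + IZR c1 * snd q + IZR c2)) by (apply Rmult_le_pos; lra).
 nra. Qed.

Lemma Pt_A2 k : A2 (Pt k).
Proof. exists (fst (Pz k)), (snd (Pz k)). repeat split; unfold inA;
 destruct k as [|[|[|[|[|[|[|[|k]]]]]]]]; simpl; auto. Qed.

Lemma empty_oct p : A2 p -> (forall i, (i < 8)%nat -> Hs i p) -> False.
Proof. intros [m [n [E1 [E2 [Im In]]]]] H. destruct p as [p1 p2]. simpl in E1, E2. subst.
 pose proof (proj1 (Hs_Z 0 m n) (H 0%nat ltac:(lia))). pose proof (proj1 (Hs_Z 1 m n) (H 1%nat ltac:(lia))).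
 pose proof (proj1 (Hs_Z 2 m n) (H 2%nat ltac:(lia))). pose proof (proj1 (Hs_Z 3 m n) (H 3%nat ltac:(lia))).
 pose proof (proj1 (Hs_Z 4 m n) (H 4%nat ltac:(lia))). pose proof (proj1 (Hs_Z 5 m n) (H 5%nat ltac:(lia))).
 pose proof (proj1 (Hs_Z 6 m n) (H 6%nat ltac:(lia))). pose proof (proj1 (Hs_Z 7 m n) (H 7%nat ltac:(lia))).
 cbv [hc] in H0, H1, H2, H3, H4, H5, H6, H7. unfold inA in *. Z.div_mod_to_equations. lia. Qed.

Lemma NoDup_map_in {X Y} (f : X -> Y) l : (forall x y, In x l -> In y l -> f x = f y -> x = y) -> NoDup l -> NoDup (map f l).
Proof. induction l; simpl; intros Hi Hn; constructor.
 - intros Hin. apply in_map_iff in Hin. destruct Hin as [z [E Hz]]. inversion Hn; subst.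
   assert (z = a) by (apply Hi; auto). subst. tauto.
 - inversion Hn; subst. apply IHl; auto. Qed.

Lemma lower h : helly_prop A2 h -> (8 <= h)%nat.
Proof.
 intros Hh. destruct (le_lt_dec 8 h) as [|Hlt]; auto. exfalso.
 set (F := map Hs (seq 0 8)).
 destruct (Hh F) as [p [Ap Hp]].
 - intros C HCi. unfold F in HCi. apply in_map_iff in HCi. destruct HCi as [i [<- _]]. apply Hs_convex.
 - intros G Hi Hl. apply NNPP. intros Hno.
   assert (Hall : forall k, (k < 8)%nat -> In (Hs k) G).
   { intros k Hk. apply NNPP. intros Hnk. apply Hno. exists (Pt k). split. apply Pt_A2.
     intros C HC. assert (HF := Hi C HC). unfold F in HF. apply in_map_iff in HF. destruct HF as [i [<- Hi']].
     apply in_seq in Hi'. apply Hs_Pt; try lia. intros ->. tauto. }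
   assert (Hn : NoDup F).
   { unfold F. apply NoDup_map_in; [|apply seq_NoDup].
     intros i j Hi' Hj' E. apply in_seq in Hi'. apply in_seq in Hj'.
     destruct (Nat.eq_dec i j); auto. exfalso.
     assert (Hs j (Pt i)) by (apply Hs_Pt; lia). rewrite <- E in H.
     apply (proj1 (Hs_Pt i i ltac:(lia) ltac:(lia))) in H. auto. }
   assert (length F <= length G)%nat.
   { apply NoDup_incl_length; auto. intros C HC. unfold F in HC. apply in_map_iff in HC.
     destruct HC as [i [<- Hi']]. apply in_seq in Hi'. apply Hall. lia. }
   unfold F in H. rewrite length_map, length_seq in H. lia.
 - apply (empty_oct p Ap). intros i Hi. apply Hp. unfold F. apply in_map_iff. exists i. split; auto. apply in_seq. lia.
Qed.

Theorem proposition10 : is_helly_number A2 8.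
Proof. split. apply helly8. apply lower. Qed.
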